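(* Let $\mathbf M=(M,N)$ be a flag matroid of rank $(1,n-1)$ on $[n]$. The polytope $P_{\mathbf M}$ is contained in the boundary of $\Delta(1,n-1;n)$ if and only if there is no element $i\in[n]$ which is neither a loop of $M$ nor a coloop of $N$.
   Context: A flag matroid $(M,N)$ of rank $(1,n-1)$: $M$ a rank-1 matroid, $N$ a rank-$(n-1)$ matroid on $[n]$, every flat of $M$ being a flat of $N$. With $e_B=\sum_{i\in B}e_i$, $P_{\mathbf M}=\operatorname{conv}\{e_i:\{i\}\text{ basis of }M\}+\operatorname{conv}\{e_B:B\text{ basis of }N\}$, and $\Delta(1,n-1;n)$ is the polytope of the flag of uniform matroids $(U_{1,n},U_{n-1,n})$, i.e. $\Delta(1,n)+\Delta(n-1,n)$ where $\Delta(d,n)=\operatorname{conv}\{e_B:|B|=d\}$ (both may be translated by $-(1,\dots,1)$; boundary is taken relative to the affine hull of $\Delta(1,n-1;n)$). *)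

(* Defs.v *)
From HB Require Import structures.
From mathcomp Require Import all_boot all_order all_algebra.
From mathcomp Require Import boolp classical_sets reals.
Set Implicit Arguments. Unset Strict Implicit. Unset Printing Implicit Defensive.
Import Order.TTheory GRing.Theory Num.Theory.
Local Open Scope ring_scope.
Local Open Scope classical_set_scope.

Record matroid (n : nat) := Matroid {
  bases : {set {set 'I_n}};
  bases_nonempty : bases != finset.set0;
  bases_exchange : forall B1 B2, B1 \in bases -> B2 \in bases ->
    forall x, x \in B1 :\: B2 ->
      exists2 y, y \in B2 :\: B1 & (y |: (B1 :\ x)) \in bases
}.

Definition mrank n (M : matroid n) (A : {set 'I_n}) : nat :=
  (\max_(B in bases M) #|A :&: B|)%N.

Definition matroid_rank n (M : matroid n) : nat := mrank M [set: 'I_n]%SET.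

Definition is_flat n (M : matroid n) (F : {set 'I_n}) : Prop :=
  forall e, e \notin F -> (mrank M F < mrank M (e |: F))%N.

Definition is_loop n (M : matroid n) (i : 'I_n) : Prop :=
  forall B, B \in bases M -> i \notin B.

Definition is_coloop n (M : matroid n) (i : 'I_n) : Prop :=
  forall B, B \in bases M -> i \in B.

Definition is_flag n (M N : matroid n) : Prop :=
  forall F, is_flat M F -> is_flat N F.

Section Poly.
Variable R : realType.
Variable n : nat.

Definition vec := 'rV[R]_n.

Definition eB (B : {set 'I_n}) : vec := \row_i (if i \in B then 1 else 0).

Definition conv_eB (S : {set {set 'I_n}}) : set vec :=
  [set x | exists l : {set 'I_n} -> R,
      (forall B, 0 <= l B) /\ (forall B, B \notin S -> l B = 0) /\
      \sum_B l B = 1 /\ x = \sum_B l B *: eB B].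

Definition msum (P Q : set vec) : set vec :=
  [set x | exists p q, P p /\ Q q /\ x = p + q].

Definition hypersimplex (d : nat) : set vec :=
  conv_eB (finset (fun B : {set 'I_n} => #|B| == d)).

Definition Delta_1_nm1 : set vec := msum (hypersimplex 1) (hypersimplex (n - 1)).

Definition flag_polytope (M N : matroid n) : set vec :=
  msum (conv_eB (bases M)) (conv_eB (bases N)).

Definition aff_hull (P : set vec) : set vec :=
  [set x | exists (k : nat) (p : 'I_k -> vec) (mu : 'I_k -> R),
      (forall j, P (p j)) /\ \sum_j mu j = 1 /\ x = \sum_j mu j *: p j].

Definition close (x y : vec) (e : R) : Prop := forall i, `|y 0 i - x 0 i| < e.

Definition rel_boundary (P : set vec) : set vec :=
  [set x | aff_hull P x /\ forall e : R, 0 < e ->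
      (exists y, P y /\ close x y e) /\
      (exists y, aff_hull P y /\ ~ P y /\ close x y e)].
End Poly.

(* Main.v *)
Require Import Defs.
From HB Require Import structures.
From mathcomp Require Import all_boot all_order all_algebra.
From mathcomp Require Import boolp classical_sets reals.
From mathcomp Require Import lra zify.
Set Implicit Arguments. Unset Strict Implicit. Unset Printing Implicit Defensive.
Import Order.TTheory GRing.Theory Num.Theory.

Section Mat.
Variable n : nat.
Variable M : matroid n.

Lemma base_card_le_k k : forall B1 B2, #|B1 :\: B2| = k -> B1 \in bases M -> B2 \in bases M -> #|B1| <= #|B2|.
Proof.
elim: k => [|k IH] B1 B2 Hk H1 H2.
  apply: subset_leq_card; rewrite -finset.setD_eq0; apply/eqP; exact/cards0_eq.
have /set0Pn [x Hx] : B1 :\: B2 != finset.set0.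
  by apply/negP => /eqP E; rewrite E finset.cards0 in Hk.
have [y Hy Hb] := bases_exchange H1 H2 Hx.
have Hxd := Hx; rewrite inE in Hxd; case/andP: Hxd => xB2 xB1.
have Hyd := Hy; rewrite inE in Hyd; case/andP: Hyd => yB1 yB2.
have E1 : #|y |: (B1 :\ x)| = #|B1|.
  rewrite cardsU1 (cardsD1 x B1) xB1 !inE (negbTE yB1) andbF /=; by rewrite add1n.
rewrite -E1; apply: (IH _ B2) => //.
have -> : (y |: B1 :\ x) :\: B2 = (B1 :\: B2) :\ x.
  apply/setP => z; rewrite !inE.
  case: (eqVneq z y) => [->|]; first by rewrite yB2 (negbTE yB1) /=; case: eqP => // ->; rewrite xB2.
  by rewrite /=; case: (z == x); rewrite ?andbF.
by move: Hk; rewrite (cardsD1 x (B1 :\: B2)) Hx add1n => -[].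
Qed.

Lemma base_card_eq B1 B2 : B1 \in bases M -> B2 \in bases M -> #|B1| = #|B2|.
Proof.
move=> H1 H2; apply/eqP; rewrite eqn_leq.
by rewrite (base_card_le_k erefl H1 H2) (base_card_le_k erefl H2 H1).
Qed.

Lemma base_card_rank B : B \in bases M -> #|B| = matroid_rank M.
Proof.
move=> HB; rewrite /matroid_rank /mrank; apply/eqP; rewrite eqn_leq.
apply/andP; split.
  by apply: leq_trans (leq_bigmax_cond _ HB); rewrite finset.setTI.
by apply/bigmax_leqP => B' HB'; rewrite finset.setTI (base_card_eq HB' HB).
Qed.

End Mat.
Section Pol.
Variable R : realType.
Variable n : nat.
Local Open Scope ring_scope.

Definition sumS (A : {set 'I_n}) (x : vec R n) : R := \sum_(i in A) x 0 i.

Lemma sumSD A (x y : vec R n) : sumS A (x + y) = sumS A x + sumS A y.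
Proof. by rewrite /sumS -big_split; apply: eq_bigr => i _; rewrite mxE. Qed.

Lemma sumSZ A a (x : vec R n) : sumS A (a *: x) = a * sumS A x.
Proof. by rewrite /sumS mulr_sumr; apply: eq_bigr => i _; rewrite mxE. Qed.

Lemma sumS_sum (I : finType) A (f : I -> vec R n) :
  sumS A (\sum_j f j) = \sum_j sumS A (f j).
Proof.
rewrite /sumS exchange_big /=; apply: eq_bigr => i _; by rewrite summxE.
Qed.

Lemma sumS_eB A B : sumS A (eB R B) = #|A :&: B|%:R.
Proof.
rewrite /sumS (eq_bigr (fun i => ((i \in B)%:R : R))); last by move=> i _; rewrite /eB mxE; case: (i \in B).
rewrite -natr_sum; congr _%:R; rewrite -sum1_card big_mkcond /= [RHS]big_mkcond /=.
apply: eq_bigr => i _; rewrite finset.in_setI; by case: (i \in A); case: (i \in B).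
Qed.

Lemma conv_sumS (S : {set {set 'I_n}}) (A : {set 'I_n}) (x : vec R n) : conv_eB S x ->
  exists l : {set 'I_n} -> R, (forall B, 0 <= l B) /\ (forall B, B \notin S -> l B = 0) /\
    \sum_B l B = 1 /\ sumS A x = \sum_B l B * #|A :&: B|%:R.
Proof.
case=> l [l0 [lS [l1 ->]]]; exists l; do 3!split => //.
rewrite sumS_sum; apply: eq_bigr => B _; by rewrite sumSZ sumS_eB.
Qed.

Lemma conv_sumS_eq (S : {set {set 'I_n}}) (A : {set 'I_n}) c (x : vec R n) : (forall B, B \in S -> #|A :&: B| = c) ->
  conv_eB S x -> sumS A x = c%:R.
Proof.
move=> Hc /(conv_sumS A) [l [l0 [lS [l1 ->]]]].
have -> : (c%:R : R) = \sum_B l B * c%:R by rewrite -mulr_suml l1 mul1r.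
apply: eq_bigr => B _.
case: (boolP (B \in S)) => HB; first by rewrite Hc.
by rewrite lS // !mul0r.
Qed.

Lemma conv_sumS_le (S : {set {set 'I_n}}) (A : {set 'I_n}) c (x : vec R n) : (forall B, B \in S -> (#|A :&: B| <= c)%N) ->
  conv_eB S x -> sumS A x <= c%:R.
Proof.
move=> Hc /(conv_sumS A) [l [l0 [lS [l1 ->]]]].
have -> : (c%:R : R) = \sum_B l B * c%:R by rewrite -mulr_suml l1 mul1r.
apply: ler_sum => B _.
case: (boolP (B \in S)) => HB; last by rewrite lS // !mul0r.
by apply: ler_wpM2l => //; rewrite ler_nat; apply: Hc.
Qed.

Lemma conv_mono (S S' : {set {set 'I_n}}) (x : vec R n) : S \subset S' -> conv_eB S x -> conv_eB S' x.
Proof.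
move=> sub [l [l0 [lS [l1 ->]]]]; exists l; split; [done|split; [|by split]].
move=> B HB; apply: lS; apply/negP => H; move/negP: HB; apply; exact: (fintype.subsetP sub).
Qed.

Lemma conv_comb (I : finType) (S : {set {set 'I_n}}) (w : I -> R) (g : I -> {set 'I_n}) :
  (forall j, 0 <= w j) -> \sum_j w j = 1 -> (forall j, g j \in S) ->
  conv_eB S (\sum_j w j *: eB R (g j)).
Proof.
move=> w0 w1 gS.
exists (fun B => \sum_(j | g j == B) w j); split; [|split; [|split]].
- by move=> B; apply: sumr_ge0.
- move=> B HB; apply: big1 => j /eqP E; by move: HB; rewrite -E gS.
- by rewrite -w1 (partition_big g xpredT).
- rewrite (partition_big g xpredT) //=; apply: eq_bigr => B _.
  rewrite scaler_suml; apply: eq_bigr => j /eqP ->; done.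
Qed.

End Pol.
Section Main.
Variable R : realType.
Variable n : nat.
Variables M N : matroid n.
Hypothesis hM : matroid_rank M = 1%N.
Hypothesis hN : matroid_rank N = (n - 1)%N.
Local Open Scope ring_scope.

Notation T := ([set: 'I_n]%SET).
Notation Delta := (@Delta_1_nm1 R n).

Lemma cardM B : B \in bases M -> #|B| = 1%N.
Proof. by move=> HB; rewrite (base_card_rank HB). Qed.
Lemma cardN B : B \in bases N -> #|B| = (n-1)%N.
Proof. by move=> HB; rewrite (base_card_rank HB). Qed.

Lemma n_ge1 : (1 <= n)%N.
Proof.
have /finset.set0Pn [B HB] := bases_nonempty M.
by rewrite -(card_ord n) -(cardM HB); apply: max_card.
Qed.

Lemma baseN_compl B j : B \in bases N -> j \notin B -> B = (~: [set j])%SET.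
Proof.
move=> HB jB; apply/eqP; rewrite eqEcard cardsC1 card_ord (cardN HB) subn1 leqnn andbT.
apply/fintype.subsetP => k kB; rewrite !inE; apply/eqP => E; by rewrite -E kB in jB.
Qed.

Lemma baseN_ex B : B \in bases N -> exists j, j \notin B.
Proof.
move=> HB; case: (pickP (fun j => j \notin B)) => [j Hj|H]; first by exists j.
exfalso; have : (T \subset B)%SET by apply/fintype.subsetP => k _; move/negbFE: (H k).
move/subset_leq_card; rewrite cardsT card_ord (cardN HB).
have := n_ge1; lia.
Qed.

Lemma baseM_set1 B : B \in bases M -> exists a, B = [set a]%SET.
Proof. by move=> HB; apply/cards1P; rewrite cardM. Qed.

Lemma conv_pt (S : {set {set 'I_n}}) B : B \in S -> conv_eB S (eB R B).
Proof.
move=> HB; have H := @conv_comb R n 'I_1 S (fun _ => 1) (fun _ => B).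
rewrite !big_ord1 scale1r in H; by apply: H.
Qed.

Lemma in_card1 B : B \in finset (fun B : {set 'I_n} => #|B| == 1%N) = (#|B| == 1%N).
Proof. by rewrite inE. Qed.

Lemma Delta_sum z : Delta z -> sumS T z = n%:R.
Proof.
case=> p [q [Hp [Hq ->]]]; rewrite sumSD.
rewrite (conv_sumS_eq (c := 1%N) _ Hp); last by move=> B; rewrite inE finset.setTI => /eqP.
rewrite (conv_sumS_eq (c := (n-1)%N) _ Hq); last by move=> B; rewrite inE finset.setTI => /eqP.
by rewrite -natrD subnKC // n_ge1.
Qed.

Lemma aff_sum y : aff_hull Delta y -> sumS T y = n%:R.
Proof.
case=> k [p [mu [Hp [Hmu ->]]]]; rewrite sumS_sum.
rewrite (eq_bigr (fun j => mu j * n%:R)); first by rewrite -mulr_suml Hmu mul1r.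
by move=> j _; rewrite sumSZ Delta_sum.
Qed.

Lemma PM_Delta x : flag_polytope M N x -> Delta x.
Proof.
case=> p [q [Hp [Hq ->]]]; exists p, q; split; [|split; [|done]].
- apply: conv_mono Hp; apply/fintype.subsetP => B HB; by rewrite inE cardM.
- apply: conv_mono Hq; apply/fintype.subsetP => B HB; by rewrite inE cardN.
Qed.

Lemma eBE (B : {set 'I_n}) (k : 'I_n) : (eB R B) 0 k = if k \in B then 1 else 0.
Proof. by rewrite /eB mxE. Qed.

Lemma sumSB (A : {set 'I_n}) (x y : vec R n) : sumS A (x - y) = sumS A x - sumS A y.
Proof. by rewrite sumSD -scaleN1r sumSZ mulN1r. Qed.


Lemma dir2 : (forall i, is_loop M i \/ is_coloop N i) ->
  forall x, flag_polytope M N x -> rel_boundary Delta x.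
Proof.
move=> H.
pose A := [set i | [exists B in bases M, i \in B]]%SET.
have hAM : forall B, B \in bases M -> #|A :&: B|%SET = 1%N.
  move=> B HB; have sub : (B \subset A)%SET.
    apply/fintype.subsetP => k kB; rewrite inE; apply/existsP; exists B; by rewrite HB kB.
  by rewrite (finset.setIidPr sub) cardM.
have hAN : forall B, B \in bases N -> #|A :&: B|%SET = #|A|.
  move=> B HB; have sub : (A \subset B)%SET.
    apply/fintype.subsetP => k; rewrite inE => /existsP [B0 /andP [HB0 kB0]].
    case: (H k) => [Hl|Hc]; last exact: Hc.
    by move: (Hl B0 HB0); rewrite kB0.
  by rewrite (finset.setIidPl sub).
have xsum : forall x : vec R n, flag_polytope M N x -> sumS A x = 1 + #|A|%:R.
  move=> x0 Hx0; case: Hx0 => p [q [Hp [Hq ->]]]; rewrite sumSD.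
  by rewrite (conv_sumS_eq (c := 1%N) _ Hp) // (conv_sumS_eq (c := #|A|) _ Hq).
have zle : forall z : vec R n, Delta z -> sumS A z <= 1 + #|A|%:R.
  move=> x0 Hx0; case: Hx0 => p [q [Hp [Hq ->]]]; rewrite sumSD; apply: lerD.
    apply: (conv_sumS_le (c := 1%N) _ Hp) => B; rewrite inE => /eqP <-.
    by apply: subset_leq_card; apply: finset.subsetIr.
  apply: (conv_sumS_le (c := #|A|) _ Hq) => B _.
  by apply: subset_leq_card; apply: finset.subsetIl.
have [a aA] : exists a, a \in A.
  have /finset.set0Pn [B HB] := bases_nonempty M.
  have [a Ba] := baseM_set1 HB; exists a; rewrite inE; apply/existsP; exists B.
  by rewrite HB Ba set11.
have [b bA] : exists b, b \notin A.
  case: (pickP (fun j => j \notin A)) => [j Hj|Hn]; first by exists j.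
  exfalso; have /finset.set0Pn [B HB] := bases_nonempty N.
  have : (T \subset B)%SET.
    apply/fintype.subsetP => k _; have kA : k \in A by move/negbFE: (Hn k).
    have := hAN _ HB; move=> E.
    have : (A \subset B)%SET by apply/finset.setIidPl/eqP; rewrite eqEcard finset.subsetIl E leqnn.
    by move/fintype.subsetP; apply.
  move/subset_leq_card; rewrite cardsT card_ord (cardN HB).
  have := n_ge1; lia.
have ab : a != b by apply/eqP => E; rewrite E in aA; rewrite aA in bA.
have DP : forall c d, c != d -> Delta (eB R [set c]%SET + eB R (~: [set d])%SET).
  move=> c d _; exists (eB R [set c]%SET), (eB R (~: [set d])%SET); split; [|split; [|done]].
    by apply: conv_pt; rewrite inE cards1.
  by apply: conv_pt; rewrite inE cardsC1 card_ord subn1.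
move=> x Hx; split.
  exists 1%N, (fun _ => x), (fun _ => 1); split; first by move=> _; apply: PM_Delta.
  by rewrite !big_ord1 scale1r.
move=> e e0; split.
  exists x; split; first exact: PM_Delta.
  by move=> k; rewrite subrr normr0.
pose v := eB R [set a]%SET - eB R [set b]%SET.
pose P := eB R [set a]%SET + eB R (~: [set b])%SET.
pose Q := eB R [set b]%SET + eB R (~: [set a])%SET.
exists (x + (e/2) *: v); split; [|split].
- exists 3%N, (fun t : 'I_3 => if val t == 0%N then x else if val t == 1%N then P else Q),
    (fun t : 'I_3 => if val t == 0%N then 1 else if val t == 1%N then e/4 else -(e/4)).
  split; [|split].
  + move=> t; case: ifP => _; first exact: PM_Delta.
    case: ifP => _; first exact: DP.
    by apply: DP; rewrite eq_sym.
  + rewrite !big_ord_recr big_ord0 /=; lra.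
  + apply/rowP => k; rewrite !big_ord_recr big_ord0 /= !mxE !inE.
    case Hka: (k == a); case Hkb: (k == b) => /=; try lra; exfalso; move/eqP: Hka => Hka; move/eqP: Hkb => Hkb; by move: ab; rewrite -Hka -Hkb eqxx.
- move/zle; rewrite sumSD sumSZ xsum // sumSB !sumS_eB.
  have -> : (A :&: [set a])%SET = [set a]%SET by apply/finset.setIidPr; rewrite finset.sub1set.
  have -> : (A :&: [set b])%SET = finset.set0.
    apply/setP => k; rewrite finset.in_setI finset.in_set1 finset.in_set0; case: eqP => [->|_]; by rewrite ?andbF ?(negbTE bA).
  rewrite cards1 finset.cards0; lra.
- move=> k; rewrite !mxE !inE.
  rewrite ltr_norml.
  case Hka: (k == a); case Hkb: (k == b) => /=; try (apply/andP; split; lra); exfalso; move/eqP: Hka => Hka; move/eqP: Hkb => Hkb; by move: ab; rewrite -Hka -Hkb eqxx.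
Qed.

Lemma sum_set1 (c : 'I_n -> R) m :
  \sum_k c k * (if m \in [set k]%SET then 1 else 0) = c m.
Proof.
rewrite (bigD1 m) //= finset.in_set1 eqxx mulr1 big1 ?addr0 //.
by move=> k km; rewrite finset.in_set1 eq_sym (negbTE km) mulr0.
Qed.

Lemma sum_setC1 (c : 'I_n -> R) m :
  \sum_k c k * (if m \in (~: [set k])%SET then 1 else 0) = \sum_k c k - c m.
Proof.
rewrite (bigD1 m) //= [X in _ = X - _](bigD1 m) //= finset.in_setC finset.in_set1 eqxx mulr0 add0r.
rewrite (addrC (c m)) addrK; apply: eq_bigr => k km.
by rewrite finset.in_setC finset.in_set1 eq_sym km mulr1.
Qed.

Lemma dir1 : is_flag M N -> (flag_polytope M N `<=` rel_boundary Delta)%classic ->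
  forall i, ~ is_loop M i -> ~ is_coloop N i -> False.
Proof.
move=> hF Hsub i Hl Hc.
pose nlb k := [exists B in bases M, k \in B].
pose ncb k := [exists B in bases N, k \notin B].
have nli : nlb i.
  apply/existsP; case: (pselect (exists B, (B \in bases M) && (i \in B))) => // Hn.
  exfalso; apply: Hl => B HB; apply/negP => iB; apply: Hn; exists B; by rewrite HB iB.
have nci : ncb i.
  apply/existsP; case: (pselect (exists B, (B \in bases N) && (i \notin B))) => // Hn.
  exfalso; apply: Hc => B HB; apply/negPn/negP => iB; apply: Hn; exists B; by rewrite HB iB.
have baseM_of : forall k, nlb k -> ([set k]%SET \in bases M).
  move=> k /existsP [B /andP [HB kB]]; have [a Ba] := baseM_set1 HB.
  by move: kB; rewrite Ba finset.in_set1 => /eqP ->; rewrite -Ba.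
have baseN_of : forall k, ncb k -> ((~: [set k])%SET \in bases N).
  move=> k /existsP [B /andP [HB kB]]; by rewrite -(baseN_compl HB kB).
case: (pickP (fun j => (j != i) && nlb j && ncb j)) => [j /andP [/andP [ji nlj] ncj] | Hnone].
- have n2 : (2 <= n)%N.
    have := max_card (mem [set i; j]%SET); rewrite card_ord finset.cards2 eq_sym ji; done.
  have nR : (0 : R) < n%:R by rewrite ltr0n; lia.
  pose one : vec R n := const_mx 1.
  have Hx : flag_polytope M N one.
    exists (\sum_(t : bool) (1/2 : R) *: eB R (if t then [set i] else [set j])%SET),
      (\sum_(t : bool) (1/2 : R) *: eB R (if t then ~: [set i] else ~: [set j])%SET).
    split; [|split].
    + apply: conv_comb => //; [move=> _; lra | rewrite big_bool /=; lra | by case; apply: baseM_of].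
    + apply: conv_comb => //; [move=> _; lra | rewrite big_bool /=; lra | by case; apply: baseN_of].
    + apply/rowP => k; rewrite !mxE !big_bool /= !mxE !inE.
      case Hki: (k == i); case Hkj: (k == j) => /=; try lra.
  have [_ Hb] := Hsub _ Hx.
  have ni : (0 : R) < n%:R^-1 by rewrite invr_gt0.
  have [_ [y [Hy [Hny Hcl]]]] := Hb (n%:R^-1) ni.
  apply: Hny.
  have sy := aff_sum Hy.
  pose d k := y 0 k - 1.
  have Hd : forall k, - n%:R^-1 < d k < n%:R^-1.
    by move=> k; have := Hcl k; rewrite /one mxE ltr_norml.
  have sd : \sum_k d k = 0.
    rewrite /d sumrB sumr_const card_ord.
    have -> : \sum_k y 0 k = sumS T y by rewrite /sumS; apply: eq_bigl => k; rewrite finset.in_setT.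
    by rewrite sy subrr.
  have nn : n%:R^-1 *+ n = 1 :> R.
    by rewrite -[RHS](mulVf (x := n%:R)) ?gt_eqF // mulr_natr.
  have su : \sum_(k < n) (n%:R^-1 + d k / 2) = 1.
    by rewrite big_split /= sumr_const card_ord -mulr_suml sd mul0r addr0 nn.
  have sw : \sum_(k < n) (n%:R^-1 - d k / 2) = 1.
    by rewrite sumrB sumr_const card_ord -mulr_suml sd mul0r subr0 nn.
  exists (\sum_k (n%:R^-1 + d k / 2) *: eB R [set k]%SET),
    (\sum_k (n%:R^-1 - d k / 2) *: eB R (~: [set k])%SET).
  split; [|split].
  + apply: conv_comb => //; last by move=> k; rewrite inE cards1.
    by move=> k; have /andP [h1 h2] := Hd k; lra.
  + apply: conv_comb => //; last by move=> k; rewrite inE cardsC1 card_ord subn1.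
    by move=> k; have /andP [h1 h2] := Hd k; lra.
  + apply/rowP => m; rewrite !mxE !summxE.
    under eq_bigr do rewrite mxE eBE.
    under [X in _ = _ + X]eq_bigr do rewrite mxE eBE.
    rewrite sum_set1 sum_setC1 sw /d; lra.
- pose L := [set k | ~~ nlb k]%SET.
  have flatM : is_flat M L.
    move=> e eL.
    have r0 : mrank M L = 0%N.
      apply/eqP; rewrite -leqn0; apply/bigmax_leqP => B HB; rewrite leqn0 cards_eq0.
      apply/eqP/setP => k; rewrite finset.in_setI finset.in_set0 finset.in_set.
      apply/negbTE/negP => /andP [nk kB]; move/negP: nk; apply; apply/existsP; exists B; by rewrite HB kB.
    rewrite r0; move: eL; rewrite finset.in_set negbK => /existsP [B0 /andP [HB0 eB0]].
    apply: leq_trans (leq_bigmax_cond _ HB0); rewrite card_gt0; apply/finset.set0Pn; exists e.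
    by rewrite finset.in_setI finset.in_setU1 eqxx eB0.
  have iL : i \notin L by rewrite finset.in_set negbK.
  have := hF _ flatM i iL.
  have r1 : (#|L| <= mrank N L)%N.
    apply: leq_trans (leq_bigmax_cond _ (baseN_of _ nci)).
    rewrite (finset.setIidPl _) //; apply/fintype.subsetP => k kL.
    rewrite finset.in_setC finset.in_set1; apply/eqP => E; by rewrite -E kL in iL.
  have r2 : (mrank N (i |: L) <= #|L|)%N.
    apply/bigmax_leqP => B HB; have [j jB] := baseN_ex HB.
    have EB := baseN_compl HB jB; rewrite EB.
    case: (eqVneq j i) => [->|ji].
      apply: subset_leq_card; apply/fintype.subsetP => k.
      rewrite finset.in_setI finset.in_setU1 finset.in_setC finset.in_set1.
      by case: (k == i) => //=; rewrite andbT.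
    have jL : j \in L.
      have ncj : ncb j by apply/existsP; exists B; rewrite HB jB.
      move: (Hnone j) => /= /negbT; rewrite ji ncj andbT /= => nlj.
      by rewrite finset.in_set.
    rewrite -finset.setDE.
    have := cardsD1 j (i |: L); rewrite finset.in_setU1 jL orbT cardsU1 iL.
    lia.
  by move=> h; move: (leq_trans (leq_ltn_trans r1 h) r2); rewrite ltnn.
Qed.

End Main.

Local Open Scope classical_set_scope.

Theorem proposition6p2 (R : realType) (n : nat) (M N : matroid n) :
  matroid_rank M = 1%N -> matroid_rank N = (n - 1)%N -> is_flag M N ->
  (@flag_polytope R n M N `<=` rel_boundary (@Delta_1_nm1 R n) <->
   ~ (exists i : 'I_n, ~ is_loop M i /\ ~ is_coloop N i)).
Proof.
move=> hM hN hF; split.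
- move=> Hsub [i [Hl Hc]]; exact: (dir1 hM hN hF Hsub Hl Hc).
- move=> H; apply: (dir2 hM hN) => i.
  case: (pselect (is_loop M i)) => [h|h]; first by left.
  case: (pselect (is_coloop N i)) => [h'|h']; first by right.
  by exfalso; apply: H; exists i.
Qed.
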